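(* Assume $\alpha>\beta\ge1$ and let $(U,V,\Lambda)$ be the similarity profile. For all measurable $\rho,\zeta:\mathbb R\to(0,\infty)$ for which the integrals are defined, setting $\mathbf u=(\rho U,\zeta V)$, $$\mathcal I_{\Lambda,2}(\rho,\zeta)\le\theta\,\mathcal E_{\mathrm B}(\mathbf u|\mathbf U),\qquad\theta:=(\alpha-\beta)\|\Lambda/V\|_{L^\infty}.$$
   Context: Fix $d_1,d_2,k>0$, real stoichiometric coefficients $\alpha,\beta\ge1$ and $A_-,A_+>0$. The similarity profile is a triple $(U,V,\Lambda)$ with $U,V\in\mathrm C^2(\mathbb R)$ positive, bounded and bounded away from $0$, $\Lambda:\mathbb R\to\mathbb R$, satisfying $d_1U''+\tfrac y2U'+\alpha\Lambda=0$, $d_2V''+\tfrac y2V'-\beta\Lambda=0$, $U^\alpha=V^\beta$ on $\mathbb R$, and $U(\pm\infty)=A_\pm^\beta$, $V(\pm\infty)=A_\pm^\alpha$; $\mathbf U=(U,V)$. $\lambda_{\mathrm B}(z)=z\log z-z+1$; $\mathcal E_{\mathrm B}(\mathbf u|\mathbf U)=\int_{\mathbb R}\big(\lambda_{\mathrm B}(\rho)U+\lambda_{\mathrm B}(\zeta)V\big)\mathrm dy$ with $\rho=u/U$, $\zeta=v/V$. Let $\Psi(r)=\alpha(r^{1/\alpha}-1)$ for $r\ge0$. The mixed term $\mathcal I_\Lambda(\rho,\zeta)=\int_{\mathbb R}\big((\zeta-1)\beta-(\rho-1)\alpha\big)\Lambda\,\mathrm dy$ is split as $\mathcal I_\Lambda=\mathcal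 I_{\Lambda,1}+\mathcal I_{\Lambda,2}$ with $\mathcal I_{\Lambda,1}(\rho,\zeta)=\int_{\mathbb R}\big(\Psi(\zeta^\beta)-\Psi(\rho^\alpha)\big)\Lambda\,\mathrm dy$ and $\mathcal I_{\Lambda,2}(\rho,\zeta)=\int_{\mathbb R}\Big(\big(\zeta-1-\tfrac1\beta\Psi(\zeta^\beta)\big)\beta-\big(\rho-1-\tfrac1\alpha\Psi(\rho^\alpha)\big)\alpha\Big)\Lambda\,\mathrm dy$. $\|\cdot\|_{L^\infty}$ is the supremum of the absolute value. *)

(* Defs.v *)
From HB Require Import structures.
From mathcomp Require Import all_boot all_order all_algebra.
From mathcomp Require Import all_classical all_reals all_analysis.
Set Implicit Arguments. Unset Strict Implicit. Unset Printing Implicit Defensive.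
Import Order.TTheory GRing.Theory Num.Theory.
Import numFieldNormedType.Exports.
Local Open Scope classical_set_scope.
Local Open Scope ring_scope.

Section Defs.
Variable R : realType.

Definition C2 (f : R -> R) : Prop :=
  (forall y, derivable f y 1) /\ (forall y, derivable (derive1 f) y 1) /\
  continuous (derive1 (derive1 f)).

Definition pos_bdd_away (f : R -> R) : Prop :=
  (exists c : R, 0 < c /\ forall y, c <= f y) /\ (exists M : R, forall y, f y <= M).

Definition similarity_profile (d1 d2 alpha beta Am Ap : R) (U V Lam : R -> R) : Prop :=
  C2 U /\ C2 V /\ pos_bdd_away U /\ pos_bdd_away V /\
  (forall y, d1 * derive1 (derive1 U) y + y / 2 * derive1 U y + alpha * Lam y = 0) /\
  (forall y, d2 * derive1 (derive1 V) y + y / 2 * derive1 V y - beta * Lam y = 0) /\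
  (forall y, U y `^ alpha = V y `^ beta) /\
  U x @[x --> -oo] --> Am `^ beta /\ U x @[x --> +oo] --> Ap `^ beta /\
  V x @[x --> -oo] --> Am `^ alpha /\ V x @[x --> +oo] --> Ap `^ alpha.

Definition lambdaB (z : R) : R := z * ln z - z + 1.

Definition Psi (alpha r : R) : R := alpha * (r `^ (alpha^-1) - 1).

Definition EB (U V rho zeta : R -> R) : \bar R :=
  (\int[lebesgue_measure]_(y in [set: R])
     (lambdaB (rho y) * U y + lambdaB (zeta y) * V y)%:E)%E.

Definition I2_integrand (alpha beta : R) (Lam rho zeta : R -> R) (y : R) : R :=
  ((zeta y - 1 - beta^-1 * Psi alpha (zeta y `^ beta)) * beta
   - (rho y - 1 - alpha^-1 * Psi alpha (rho y `^ alpha)) * alpha) * Lam y.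

Definition I_Lam2 (alpha beta : R) (Lam rho zeta : R -> R) : \bar R :=
  (\int[lebesgue_measure]_(y in [set: R]) (I2_integrand alpha beta Lam rho zeta y)%:E)%E.

Definition Linf_norm (f : R -> R) : \bar R :=
  ereal_sup (range (fun y => (`|f y|)%:E)).

End Defs.

(* Main.v *)
Require Import Defs.
From HB Require Import structures.
From mathcomp Require Import all_boot all_order all_algebra.
From mathcomp Require Import all_classical all_reals all_analysis.
From mathcomp Require Import ring lra measurable_realfun.
Import Order.TTheory GRing.Theory Num.Theory.
Import numFieldNormedType.Exports.
Local Open Scope classical_set_scope.
Local Open Scope ring_scope.

Section Aux.
Variable R : realType.

Lemma powR_expR (t a : R) : (expR t) `^ a = expR (a * t).
Proof. by rewrite /powR gt_eqF ?expR_gt0// expRK. Qed.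

Lemma lambdaB_ge0 (x : R) : 0 < x -> 0 <= lambdaB x.
Proof.
move=> x0; rewrite /lambdaB -(lnK x0); set t := ln x; rewrite expRK.
have h := expR_ge1Dx (- t).
have e : expR t * expR (- t) = 1 by rewrite -expRD subrr expR0.
have et := expR_gt0 t.
have : expR t * (1 - t) <= 1.
  by rewrite -[X in _ <= X]e ler_pM2l.
lra.
Qed.

Lemma G_bounds (alpha beta x : R) : 1 <= beta -> beta < alpha -> 0 < x ->
  0 <= (x - 1 - beta^-1 * Psi alpha (x `^ beta)) * beta <= (alpha - beta) * lambdaB x.
Proof.
move=> b1 ba x0.
have a0 : 0 < alpha by lra.
have b0 : 0 < beta by lra.
have -> : (x - 1 - beta^-1 * Psi alpha (x `^ beta)) * beta
   = beta * x - beta - alpha * x `^ (beta / alpha) + alpha.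
  rewrite /Psi -powRrM. field. lra.
set p := beta / alpha.
have p0 : 0 < p by rewrite divr_gt0.
have p1 : p < 1 by rewrite ltr_pdivrMr // mul1r.
have bp : beta = alpha * p by rewrite /p mulrC divfK // gt_eqF.
rewrite bp /lambdaB -(lnK x0); set t := ln x; rewrite expRK powR_expR.
have et := expR_gt0 t.
apply/andP; split.
  have P0 : 0 < p^-1 by rewrite invr_gt0.
  have Q0 : 0 < (1 - p)^-1 by rewrite invr_gt0 subr_gt0.
  have PQ : p^-1^-1 + (1 - p)^-1^-1 = 1 by rewrite !invrK; ring.
  have h := @conjugate_powR R (expR (p * t)) 1 p^-1 (1 - p)^-1 (ltW (expR_gt0 _)) ler01
    P0 Q0 PQ.
  move: h; rewrite mulr1 powR_expR mulrA mulVf ?gt_eqF // mul1r !invrK => h.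
  have e1 : (1:R) `^ (1 - p)^-1 = 1 by rewrite powR1.
  rewrite e1 in h.
  have : alpha * expR (p * t) <= alpha * (expR t * p + 1 * (1 - p)) by rewrite ler_pM2l.
  nra.
have h := expR_ge1Dx ((p - 1) * t).
have e : expR (p * t) = expR t * expR ((p - 1) * t) by rewrite -expRD; congr expR; ring.
have : expR t * (1 + (p - 1) * t) <= expR (p * t) by rewrite e ler_pM2l.
move=> H.
have : alpha * (expR t * (1 + (p - 1) * t)) <= alpha * expR (p * t) by rewrite ler_pM2l.
nra.
Qed.

Lemma pointwise (alpha beta : R) (U V Lam rho zeta : R -> R) (y : R) :
  1 <= beta -> beta < alpha -> 0 < rho y -> 0 < zeta y -> 0 < V y -> 0 <= U y ->
  I2_integrand alpha beta Lam rho zeta y <=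
  (alpha - beta) * `|Lam y / V y| * (lambdaB (rho y) * U y + lambdaB (zeta y) * V y).
Proof.
move=> b1 ba r0 z0 V0 U0.
have a0 : 0 < alpha by lra.
rewrite /I2_integrand.
have E : Psi alpha (rho y `^ alpha) = alpha * (rho y - 1).
  rewrite /Psi -powRrM mulfV ?gt_eqF // powRr1 ?ltW //.
rewrite E mulKf ?gt_eqF // subrr mul0r subr0.
have /andP[G0 G1] := G_bounds _ _ _ b1 ba z0.
set G := (zeta y - 1 - _) * beta in G0 G1 *.
have l0 := @lambdaB_ge0 _ r0.
have l1 := @lambdaB_ge0 _ z0.
have eV : `|Lam y / V y| * V y = `|Lam y|.
  by rewrite normf_div (gtr0_norm V0) divfK // gt_eqF.
have h1 : G * Lam y <= G * `|Lam y| by rewrite ler_wpM2l // ler_norm.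
have h2 : G * `|Lam y| <= (alpha - beta) * lambdaB (zeta y) * `|Lam y|
  by rewrite ler_wpM2r.
have h3 : 0 <= lambdaB (rho y) * U y by rewrite mulr_ge0.
have ab : 0 <= alpha - beta by lra.
have h4 : 0 <= (alpha - beta) * `|Lam y / V y| by rewrite mulr_ge0.
apply: (le_trans h1); apply: (le_trans h2).
have -> : (alpha - beta) * lambdaB (zeta y) * `|Lam y| =
   (alpha - beta) * `|Lam y / V y| * (lambdaB (zeta y) * V y) by rewrite -eV; ring.
by rewrite mulrDr lerDr mulr_ge0.
Qed.
End Aux.

Theorem mainTheorem15 (R : realType) (d1 d2 k alpha beta Am Ap : R)
  (U V Lam : R -> R) :
  0 < d1 -> 0 < d2 -> 0 < k -> 0 < Am -> 0 < Ap ->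
  1 <= beta -> beta < alpha ->
  similarity_profile d1 d2 alpha beta Am Ap U V Lam ->
  forall rho zeta : R -> R,
    measurable_fun [set: R] rho -> measurable_fun [set: R] zeta ->
    (forall y, 0 < rho y) -> (forall y, 0 < zeta y) ->
    lebesgue_measure.-integrable [set: R]
      (fun y => (I2_integrand alpha beta Lam rho zeta y)%:E) ->
    (I_Lam2 alpha beta Lam rho zeta
      <= ((alpha - beta)%:E * Linf_norm (fun y => (Lam y / V y)%R)) * EB U V rho zeta)%E.
Proof.
move=> d10 d20 k0 Am0 Ap0 b1 ba [[dU _] [[dV _] [[[cU [cU0 cUle]] _] [[[cV [cV0 cVle]] _] _]]]].
move=> rho zeta mrho mzeta r0 z0 intf.
have U0 y : 0 <= U y by apply: le_trans (ltW cU0) (cUle y).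
have V0 y : 0 < V y by apply: lt_le_trans cV0 (cVle y).
set phi := fun y => lambdaB (rho y) * U y + lambdaB (zeta y) * V y.
set c := fun y => `|Lam y / V y|.
set f := fun y => I2_integrand alpha beta Lam rho zeta y.
have pw y : f y <= (alpha - beta) * c y * phi y :=
  @pointwise R alpha beta U V Lam rho zeta y b1 ba (r0 y) (z0 y) (V0 y) (U0 y).
have phi0 y : 0 <= phi y.
  by rewrite addr_ge0 // mulr_ge0 ?lambdaB_ge0 // ltW.
have mU : measurable_fun setT U.
  apply: measurable_realfun.continuous_measurable_fun => y; apply/differentiable_continuous.
  by rewrite -derivable1_diffP.
have mV : measurable_fun setT V.
  apply: measurable_realfun.continuous_measurable_fun => y; apply/differentiable_continuous.
  by rewrite -derivable1_diffP.
have mlam (g : R -> R) : measurable_fun setT g -> measurable_fun setT (fun y => lambdaB (g y)).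
  move=> mg; rewrite /lambdaB.
  apply: measurable_realfun.measurable_funD; last exact: measurable_cst.
  apply: measurable_realfun.measurable_funB => //.
  apply: measurable_realfun.measurable_funM => //.
  exact: measurableT_comp (@measurable_realfun.measurable_ln R) mg.
have mphi : measurable_fun setT (fun y => (phi y)%:E).
  apply/measurable_realfun.measurable_EFinP.
  apply: measurable_realfun.measurable_funD; apply: measurable_realfun.measurable_funM => //;
    exact: mlam.
have mf := measurable_int _ intf.
have If : (I_Lam2 alpha beta Lam rho zeta <=
    \int[lebesgue_measure]_(y in [set: R]) ((fun y => (f y)%:E)^\+ y))%E.
  apply: le_integral => //; first exact: integrable_funepos.
  by move=> y _; rewrite funeposE le_max lexx.
have EB0 : (0 <= EB U V rho zeta)%E.
  by apply: integral_ge0 => y _; rewrite lee_fin; exact: phi0.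
have cL y : ((c y)%:E <= Linf_norm (fun y => (Lam y / V y)%R))%E.
  by apply: ereal_sup_ubound; exists y.
have L0 : (0 <= Linf_norm (fun y => (Lam y / V y)%R))%E.
  by apply: le_trans _ (cL 0); rewrite -abse_EFin abse_ge0.
have fp0 y : (0 <= (fun y => (f y)%:E)^\+ y)%E by rewrite funeposE le_max lexx orbT.
have mfp := measurable_funepos mf.
move: L0 cL; case: (Linf_norm _) => [r| |] L0 cL.
- have cr y : c y <= r by rewrite -lee_fin cL.
  have rpos : 0 <= r by apply: le_trans (normr_ge0 (Lam 0 / V 0)) _; rewrite -lee_fin cL.
  have ar : 0 <= (alpha - beta) * r by rewrite mulr_ge0 // subr_ge0 ltW.
  apply: (le_trans If).
  rewrite -EFinM /EB -ge0_integralZl_EFin //; last by move=> y _; exact: phi0.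
  apply: ge0_le_integral => //.
    by apply: emeasurable_funM => //; exact: measurable_cst.
  move=> y _; rewrite funeposE ge_max; apply/andP; split.
    rewrite -EFinM lee_fin; apply: le_trans (pw y) _.
    by rewrite ler_wpM2r // ler_wpM2l // subr_ge0 ltW.
  by rewrite -EFinM; exact: (mulr_ge0 ar (phi0 y)).
- rewrite mulry gtr0_sg ?subr_gt0 // mul1e.
  move: EB0; rewrite le_eqVlt => /orP[/eqP EBz|EBpos].
    rewrite -EBz mule0; apply: (le_trans If).
    have ae : ae_eq lebesgue_measure setT (fun y => (phi y)%:E) (cst 0%E).
      apply/ae_eq_integral_abs => //.
      rewrite EBz /EB; apply: eq_integral => y _.
      by rewrite abse_EFin ger0_norm.
    rewrite -(integral0 lebesgue_measure setT).
    apply: ae_ge0_le_integral => //.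
    apply: filterS ae => y Hy _.
    have := Hy I; rewrite /cst => /eqP; rewrite eqe => /eqP phy.
    rewrite funeposE ge_max lexx andbT lee_fin.
    by have := pw y; rewrite phy mulr0.
  by rewrite gt0_mulye // leey.
- by [].
Qed.
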